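(* Let $n\ge2$, $p\in[0,1]$, and let $T_{k+1}$ be the number of $k$-simplices of $\mathcal{L}\sim X(n,p)$ that are critical for the lexicographical matching. Then for every integer $1\le k\le n-1$, \[ p^{\binom{k+1}{2}+k}\binom{n-2}{k}(1-p)\le\mathbb{E}[T_{k+1}]\le p^{\binom{k+1}{2}-k-1}\binom{n-1}{k}(1-p) \] (for $p\in(0,1]$ in the upper bound).
   Context: $G(n,p)$ is the random graph on $[n]$ where each of the $\binom n2$ edges is present independently with probability $p$; write $Y_{i,j}=Y_{j,i}$ for the edge indicator of $\{i,j\}$. $X(n,p)$ is the clique complex of $G\sim G(n,p)$: the simplicial complex on $[n]$ whose simplices are the nonempty vertex sets spanning cliques in $G$; a $k$-simplex is such a set of size $k+1$. Lexicographical matching on a simplicial complex $\mathcal{L}$: for $s\in\mathcal{L}$ let $I_{\mathcal{L}}(s)=\{j: j<\min(s),\ s\cup\{j\}\in\mathcal{L}\}$; whenever nonempty, pair $s$ with $s\cup\{\min I_{\mathcal{L}}(s)\}$. A simplex is critical if it is in no pair. Explicitly, with $C_{k+1}$ the set of $(k+1)$-subsets of $[n]$ and $s_-=s\setminus\{\min s\}$, \[ T_{k+1}=\sum_{s\in C_{k+1}}\prod_{i\ne j\in s}Y_{i,j}\Bigl[\prod_{i=1}^{\min(s)-1}\Bigl(1-\prod_{j\in s}Y_{i,j}\Bigr)-\prod_{i=1}^{\min(s)-1}\Bigl(1-\prod_{j\in s_-}Y_{i,j}\Bigr)\Bigr]. \] *)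

(* Defs.v *)
From mathcomp Require Import all_boot all_order all_algebra.
Set Implicit Arguments. Unset Strict Implicit. Unset Printing Implicit Defensive.
Import Order.TTheory GRing.Theory Num.Theory.

(* Vertex set [n] is modelled by 'I_n (order-preserving relabelling 1..n -> 0..n-1).
   A graph on [n] is a set E of 2-element subsets of 'I_n. *)

Definition edge_pairs (n : nat) : {set {set 'I_n}} := [set e : {set 'I_n} | #|e| == 2].

Definition is_clique (n : nat) (E : {set {set 'I_n}}) (s : {set 'I_n}) : bool :=
  [forall i in s, forall j in s, (i != j) ==> ([set i; j] \in E)].

Definition in_clique_complex (n : nat) (E : {set {set 'I_n}}) (s : {set 'I_n}) : bool :=
  (s != set0) && is_clique E s.

Definition below_min (n : nat) (j : 'I_n) (s : {set 'I_n}) : bool :=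
  [forall x in s, (j < x)%N].

Definition lexI (n : nat) (E : {set {set 'I_n}}) (s : {set 'I_n}) : {set 'I_n} :=
  [set j | below_min j s && in_clique_complex E (j |: s)].

Definition is_min_of (n : nat) (j : 'I_n) (A : {set 'I_n}) : bool :=
  (j \in A) && [forall j' in A, (j <= j')%N].

(* s is paired with s ∪ {min I(s)} *)
Definition matched_up (n : nat) (E : {set {set 'I_n}}) (s : {set 'I_n}) : bool :=
  lexI E s != set0.

Definition matched_down (n : nat) (E : {set {set 'I_n}}) (s : {set 'I_n}) : bool :=
  [exists t : {set 'I_n}, in_clique_complex E t &&
     [exists j : 'I_n, is_min_of j (lexI E t) && (s == j |: t)]].

Definition critical (n : nat) (E : {set {set 'I_n}}) (s : {set 'I_n}) : bool :=
  [&& in_clique_complex E s, ~~ matched_up E s & ~~ matched_down E s].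

(* T_{k1} : number of critical simplices with k1 vertices (i.e. (k1-1)-simplices) *)
Definition Tcrit (n : nat) (E : {set {set 'I_n}}) (k1 : nat) : nat :=
  #|[set s : {set 'I_n} | (#|s| == k1) && critical E s]|.

Definition gnp_weight (R : realFieldType) (n : nat) (p : R) (E : {set {set 'I_n}}) : R :=
  (p ^+ #|E| * (1 - p) ^+ (#|edge_pairs n| - #|E|))%R.

Definition gnp_expect (R : realFieldType) (n : nat) (p : R)
    (X : {set {set 'I_n}} -> R) : R :=
  (\sum_(E : {set {set 'I_n}} | E \subset edge_pairs n) gnp_weight p E * X E)%R.

(* Main.v *)
Require Import Defs.
From mathcomp Require Import all_boot all_order all_algebra.
From mathcomp Require Import ring lra zify.
Import Order.TTheory GRing.Theory Num.Theory.
Local Open Scope ring_scope.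
Lemma powle (R : realFieldType) (x y : R) (N : nat) : 0 <= x -> x <= y -> x ^+ N <= y ^+ N.
Proof. by move=> x0 xy; apply: lerXn2r; rewrite // nnegrE ?(le_trans x0 xy). Qed.

Lemma geo_sum (R : realFieldType) (x : R) (N : nat) :
  (1 - x) * \sum_(i < N) x ^+ i = 1 - x ^+ N.
Proof.
rewrite -[X in _ = X - _](expr1n R N) subrXX; congr (_ * _); apply: eq_bigr => i _.
by rewrite expr1n mul1r.
Qed.

Lemma gsum_bound (R : realFieldType) (a b : R) (N : nat) :
  0 < a -> a <= b -> b <= 1 ->
  \sum_(M < N) ((1 - a) ^+ M - (1 - b) ^+ M) <= a^-1 - b^-1.
Proof.
move=> a0 ab b1.
have b0 : 0 < b by apply: lt_le_trans ab.
rewrite sumrB.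
have Sa : \sum_(M < N) (1 - a) ^+ M = (1 - (1 - a) ^+ N) / a.
  rewrite -geo_sum; field; by rewrite lt0r_neq0 // ?subKr.
have Sb : \sum_(M < N) (1 - b) ^+ M = (1 - (1 - b) ^+ N) / b.
  rewrite -geo_sum; field; by rewrite lt0r_neq0 // ?subKr.
rewrite Sa Sb !mulrBl !mul1r.
have : (1 - b) ^+ N / b <= (1 - a) ^+ N / a.
  apply: ler_pM.
  - by apply: exprn_ge0; lra.
  - by rewrite invr_ge0 ltW.
  - by apply: powle; lra.
  - by rewrite lef_pV2 ?posrE.
lra.
Qed.
Lemma binom_sets (R : comNzRingType) (T : finType) (V : {set T}) (x y : R) :
  \sum_(F : {set T} | F \subset V) (x ^+ (#|V| - #|F|) * y ^+ #|F|) = (x + y) ^+ #|V|.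
Proof.
rewrite exprDn.
rewrite (partition_big (fun F : {set T} => (inord #|F| : 'I_(#|V|).+1)) xpredT) //=.
apply: eq_bigr => j _.

rewrite (eq_bigl (fun F : {set T} => (F \subset V) && (#|F| == j))); last first.
  move=> F; apply: andb_id2l => /subset_leq_card FV.
  by rewrite -(inj_eq val_inj) /= inordK.
rewrite (eq_bigr (fun _ => x ^+ (#|V| - j) * y ^+ j)); last by move=> F /andP[_ /eqP ->].
rewrite sumr_const; congr (_ *+ _).
by rewrite -cards_draws; apply: eq_card => F; rewrite inE.
Qed.

Section Gnp.
Variables (R : realFieldType) (n : nat) (p : R).
Local Notation U := (edge_pairs n).
Local Notation Ex := (@gnp_expect R n p).

Lemma sum_ind (P : pred {set {set 'I_n}}) (f : {set {set 'I_n}} -> R) (b : pred {set {set 'I_n}}) :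
  \sum_(E | P E) f E * (b E)%:R = \sum_(E | P E && b E) f E.
Proof.
rewrite big_mkcondr; apply: eq_bigr => E _; by case: (b E); rewrite ?mulr1 ?mulr0.
Qed.

Lemma L0 (D : {set {set 'I_n}}) : D \subset U ->
  Ex (fun E => (D \subset E)%:R) = p ^+ #|D|.
Proof.
move=> DU; rewrite /gnp_expect /gnp_weight sum_ind.
rewrite (reindex_onto (fun F => D :|: F) (fun E => E :\: D)) /=; last first.
  by move=> E /andP[_ /subsetP DE]; apply/setP => e; rewrite !inE; case: (boolP (e \in D)) => [/DE ->|]; rewrite ?orbT ?andbT.
rewrite (eq_bigl (fun F : {set {set 'I_n}} => F \subset U :\: D)); last first.
  move=> F; rewrite subsetUl andbT setDUl setDv set0U.
  apply/andP/idP.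
    move=> [/subsetP FU /eqP FD]; apply/subsetP => e eF.
    rewrite inE; have : e \in F :\: D by rewrite FD.
    by rewrite inE => /andP[-> _]; rewrite FU // inE eF orbT.
  move=> /subsetP FUD; split.
    apply/subsetP => e; rewrite inE => /orP[/(subsetP DU)//|/FUD]; by rewrite inE => /andP[].
  apply/eqP/setP => e; rewrite inE; apply/andP/idP => [[]//|eF]; split=>//.
  by move: (FUD e eF); rewrite inE => /andP[].
have cU : #|U :\: D| = (#|U| - #|D|)%N.
  by rewrite cardsD (setIidPr DU).
transitivity (p ^+ #|D| * \sum_(F : {set {set 'I_n}} | F \subset U :\: D) ((1 - p) ^+ (#|U :\: D| - #|F|) * p ^+ #|F|)).
  rewrite mulr_sumr; apply: eq_bigr => F FUD.
  have dF : [disjoint D & F].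
    rewrite -setI_eq0; apply/eqP/setP => e; rewrite !inE; apply/andP => -[eD eF].
    by move: (subsetP FUD e eF); rewrite inE eD.
  rewrite cardsU (disjoint_setI0 dF) cards0 subn0.
  by rewrite cU subnDA exprD -!mulrA [in RHS]mulrC -mulrA (mulrC (p ^+ _)) mulrA mulrC.
by rewrite binom_sets subrK expr1n mulr1.
Qed.

Lemma Ex_ext (X Y : {set {set 'I_n}} -> R) :
  (forall E : {set {set 'I_n}}, E \subset U -> X E = Y E) -> Ex X = Ex Y.
Proof. by move=> h; apply: eq_bigr => E /h ->. Qed.

Lemma Ex_sub (X Y : {set {set 'I_n}} -> R) :
  Ex (fun E => X E - Y E) = Ex X - Ex Y.
Proof. by rewrite /gnp_expect -sumrB; apply: eq_bigr => E _; rewrite mulrBr. Qed.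

Lemma Ex_scale (c : R) (X : {set {set 'I_n}} -> R) :
  Ex (fun E => c * X E) = c * Ex X.
Proof. by rewrite /gnp_expect mulr_sumr; apply: eq_bigr => E _; rewrite mulrCA. Qed.

Lemma Ex_sum (I : finType) (P : pred I) (X : I -> {set {set 'I_n}} -> R) :
  Ex (fun E => \sum_(i | P i) X i E) = \sum_(i | P i) Ex (X i).
Proof.
rewrite /gnp_expect.
under eq_bigr do rewrite mulr_sumr.
by rewrite exchange_big.
Qed.

Definition star (j : 'I_n) (t : {set 'I_n}) : {set {set 'I_n}} := [set [set j; x] | x in t].

Lemma star_sub (j : 'I_n) (t : {set 'I_n}) : j \notin t -> star j t \subset U.
Proof.
move=> jt; apply/subsetP => e /imsetP[x xt ->]; rewrite inE cards2.
by apply/eqP; case: eqP => // jx; move: jt; rewrite jx xt.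
Qed.

Lemma card_star (j : 'I_n) (t : {set 'I_n}) : j \notin t -> #|star j t| = #|t|.
Proof.
move=> jt; rewrite card_in_imset // => x y xt yt /setP /(_ y).
rewrite !inE eqxx orbT => /orP[/eqP yj|/eqP //].
by move: jt; rewrite -yj yt.
Qed.

Lemma star_disj (i j : 'I_n) (t : {set 'I_n}) : i \notin t -> i != j -> [disjoint star i t & star j t].
Proof.
move=> it ij; rewrite -setI_eq0; apply/eqP/setP => e; rewrite !inE.
apply/andP => -[/imsetP[x xt ->] /imsetP[y yt /setP /(_ i)]].
rewrite !inE eqxx /= => /esym /orP[/eqP ij'|/eqP iy].
  by move: ij; rewrite ij' eqxx.
by move: it; rewrite iy yt.
Qed.

Lemma prod_ind (r : seq 'I_n) (b : pred 'I_n) :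
  \prod_(j <- r) (1 - (b j)%:R) = (all (fun j => ~~ b j) r)%:R :> R.
Proof.
elim: r => [|j r IH]; first by rewrite big_nil.
by rewrite big_cons IH /=; case: (b j); rewrite /= ?subrr ?mul0r ?subr0 ?mul1r.
Qed.

Lemma PL (t : {set 'I_n}) (r : seq 'I_n) : uniq r -> all (fun j => j \notin t) r ->
  forall K : {set {set 'I_n}}, K \subset U -> (forall j, j \in r -> [disjoint K & star j t]) ->
  Ex (fun E => (K \subset E)%:R * \prod_(j <- r) (1 - (star j t \subset E)%:R))
   = p ^+ #|K| * (1 - p ^+ #|t|) ^+ size r.
Proof.
elim: r => [|i r IH] /=.
  move=> _ _ K KU _; rewrite expr0 mulr1 -(L0 K KU).
  by apply: Ex_ext => E _; rewrite big_nil mulr1.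
move=> /andP[ir ur] /andP[it rt] K KU Kd.
have H1 : Ex (fun E => (K \subset E)%:R * \prod_(j <- r) (1 - (star j t \subset E)%:R))
   = p ^+ #|K| * (1 - p ^+ #|t|) ^+ size r.
  by apply: IH => // j jr; apply: Kd; rewrite inE jr orbT.
have dKi : [disjoint K & star i t] by apply: Kd; rewrite inE eqxx.
have H2 : Ex (fun E => (K :|: star i t \subset E)%:R * \prod_(j <- r) (1 - (star j t \subset E)%:R))
   = p ^+ #|K :|: star i t| * (1 - p ^+ #|t|) ^+ size r.
  apply: IH => //; first by rewrite subUset KU star_sub.
  move=> j jr; have ij : i != j by apply: contraNneq ir => ->.
  rewrite -setI_eq0 setIUl (disjoint_setI0 (Kd j _)) ?inE ?jr ?orbT //.
  by rewrite (disjoint_setI0 (star_disj _ _ _ it ij)) setU0.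
rewrite cardsU (disjoint_setI0 dKi) cards0 subn0 card_star // exprD in H2.
rewrite (@Ex_ext _ (fun E => (K \subset E)%:R * \prod_(j <- r) (1 - (star j t \subset E)%:R)
   - (K :|: star i t \subset E)%:R * \prod_(j <- r) (1 - (star j t \subset E)%:R))).
  rewrite Ex_sub H1 H2 exprS.
  move: (p ^+ #|K|) (p ^+ #|t|) ((1 - p ^+ #|t|) ^+ size r) => a b c; ring.
move=> E _; rewrite big_cons subUset.
move: (\prod_(j <- r) _) => P.
by case: (K \subset E); case: (star i t \subset E); rewrite /=; ring.
Qed.


Definition clq (s : {set 'I_n}) : {set {set 'I_n}} := [set e in U | e \subset s].

Lemma clq_sub s : clq s \subset U.
Proof. by apply/subsetP => e; rewrite inE => /andP[]. Qed.

Lemma card_clq s : #|clq s| = 'C(#|s|, 2).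
Proof.
rewrite -cards_draws; apply: eq_card => e; rewrite !inE andbC.
by [].
Qed.

Lemma clqE (E : {set {set 'I_n}}) (s : {set 'I_n}) : is_clique E s = (clq s \subset E).
Proof.
apply/forall_inP/subsetP.
  move=> h e; rewrite !inE => /andP[/cards2P [x [y [xy ->]]] /subsetP xys].
  have xs : x \in s by apply: xys; rewrite !inE eqxx.
  have ys : y \in s by apply: xys; rewrite !inE eqxx orbT.
  by move: (h x xs) => /forall_inP /(_ y ys) /implyP; apply.
move=> h i iS; apply/forall_inP => j js; apply/implyP => ij; apply: h.
rewrite !inE cards2 ij /=; apply/subsetP => x; rewrite !inE.
by case/orP => /eqP ->.
Qed.

Lemma clq_disj (j : 'I_n) (s t : {set 'I_n}) : j \notin s -> t \subset s ->
  [disjoint clq s & star j t].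
Proof.
move=> js ts; rewrite -setI_eq0; apply/eqP/setP => e; rewrite !inE.
apply/andP => -[/andP[_ /subsetP es] /imsetP[x _ ex]].
by move: js; rewrite es // ex !inE eqxx.
Qed.

Lemma clq_U1 (j : 'I_n) (s : {set 'I_n}) : j \notin s -> clq (j |: s) = clq s :|: star j s.
Proof.
move=> js; apply/setP => e; rewrite !inE; apply/idP/idP.
  move=> /andP[/cards2P [x [y [xy ee]]] /subsetP es].
  have xs : x \in j |: s by apply: es; rewrite ee !inE eqxx.
  have ys : y \in j |: s by apply: es; rewrite ee !inE eqxx orbT.
  move: xs ys; rewrite !inE => /orP[/eqP xj|xs] /orP[/eqP yj|ys].
  - by move: xy; rewrite xj yj eqxx.
  - by apply/orP; right; apply/imsetP; exists y => //; rewrite ee xj.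
  - by apply/orP; right; apply/imsetP; exists x => //; rewrite ee yj setUC.
  - apply/orP; left.
    rewrite ee cards2 xy /=.
    by apply/subsetP => z; rewrite !inE => /orP[] /eqP ->.
case/orP => [/andP[-> /subsetP es]|/imsetP[x xs ->]].
  by apply/subsetP => z /es zs; rewrite inE zs orbT.
have jx : j != x by apply: contraNneq js => ->.
rewrite cards2 jx /=; apply/subsetP => z; rewrite !inE.
by case/orP => /eqP ->; rewrite ?eqxx ?xs ?orbT.
Qed.


Definition Lo (s : {set 'I_n}) : {set 'I_n} := [set j | below_min j s].

Lemma bm_notin (j : 'I_n) (s : {set 'I_n}) : below_min j s -> j \notin s.
Proof. by move=> /forall_inP h; apply/negP => /h; rewrite ltnn. Qed.
Arguments bm_notin {j s}.

Lemma clq_mono (t s : {set 'I_n}) : t \subset s -> clq t \subset clq s.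
Proof.
move=> /subsetP ts; apply/subsetP => e; rewrite !inE => /andP[-> /subsetP et] /=.
by apply/subsetP => x /et /ts.
Qed.

Lemma Lo_lt (s : {set 'I_n}) (m : 'I_n) : m \in s -> (forall x, x \in s -> m <= x)%N ->
  forall j, (j \in Lo s) = (j < m)%N.
Proof.
move=> ms mmin j; rewrite inE; apply/forall_inP/idP => [/(_ m ms)//|jm x xs].
exact: leq_trans jm (mmin x xs).
Qed.

Lemma mu_iff (E : {set {set 'I_n}}) (s : {set 'I_n}) : clq s \subset E ->
  matched_up E s = [exists j, (j \in Lo s) && (star j s \subset E)].
Proof.
move=> C; rewrite /matched_up; apply/set0Pn/existsP.
  move=> [j]; rewrite inE => /andP[bj /andP[_ cl]]; exists j.
  rewrite inE bj /=; move: cl; rewrite clqE clq_U1 ?bm_notin // subUset.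
  by case/andP.
move=> [j /andP[jL jA]]; exists j; move: jL; rewrite !inE => bj; rewrite bj /=.
apply/andP; split; first by apply/set0Pn; exists j; rewrite !inE eqxx.
by rewrite clqE clq_U1 ?bm_notin // subUset C.
Qed.

Lemma md_iff (E : {set {set 'I_n}}) (s : {set 'I_n}) (m : 'I_n) :
  (1 < #|s|)%N -> m \in s -> (forall x, x \in s -> m <= x)%N -> clq s \subset E ->
  matched_down E s = [forall j, (j \in Lo s) ==> ~~ (star j (s :\ m) \subset E)].
Proof.
move=> hs ms mmin C.
have LL := Lo_lt _ _ ms mmin.
have bmt : below_min m (s :\ m).
  apply/forall_inP => x; rewrite !inE => /andP[xm xs].
  by rewrite ltn_neqAle mmin // andbT; apply: contra xm => /eqP h; apply/eqP/val_inj.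
have Ct : clq (s :\ m) \subset E by apply: subset_trans C; apply: clq_mono; apply: subD1set.
apply/existsP/forall_inP.
  move=> [t /andP[cct /existsP[j /andP[/andP[jI jmin] /eqP sE]]]].
  move: jI; rewrite inE => /andP[bj /andP[_ clj]].
  have jt := bm_notin bj.
  have js : j \in s by rewrite sE !inE eqxx.
  have mj : m = j.
    move: ms; rewrite sE !inE => /orP[/eqP //|mt].
    have := mmin j js; move/forall_inP: bj => /(_ m mt) h1 h2.
    by move: (leq_ltn_trans h2 h1); rewrite ltnn.
  have tE : t = s :\ m by rewrite sE mj setU1K.
  move=> j' j'L; apply/negP => A.
  have j'm : (j' < m)%N by rewrite -LL.
  have : j' \in Defs.lexI E t.
    rewrite inE; apply/andP; split.
      apply/forall_inP => x; rewrite tE !inE => /andP[_ xs].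
      exact: leq_trans j'm (mmin x xs).
    apply/andP; split; first by apply/set0Pn; exists j'; rewrite !inE eqxx.
    have bj' : below_min j' t.
      apply/forall_inP => x; rewrite tE !inE => /andP[_ xs].
      exact: leq_trans j'm (mmin x xs).
    by rewrite clqE clq_U1 ?(bm_notin bj') // subUset tE A Ct.
  move/forall_inP: jmin => h /h; rewrite -mj leqNgt j'm.
  by [].
move=> h; exists (s :\ m); apply/andP; split.
  apply/andP; split; last by rewrite clqE.
  by rewrite -card_gt0 (cardsD1 m s) ms /= in hs *.
apply/existsP; exists m; apply/andP; split; last by rewrite setD1K.
apply/andP; split.
  rewrite inE bmt /= setD1K //; apply/andP; split; first by apply/set0Pn; exists m.
  by rewrite clqE.
apply/forall_inP => j'; rewrite inE => /andP[bj' /andP[_ cl]].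
rewrite leqNgt; apply/negP => j'm.
move: (h j'); rewrite LL j'm => /(_ isT) /negP; apply.
by move: cl; rewrite clqE clq_U1 ?bm_notin // subUset => /andP[].
Qed.


Lemma all_enumE (A : {set 'I_n}) (f : pred 'I_n) :
  all f (enum A) = [forall j in A, f j].
Proof.
apply/allP/forall_inP => h j; first by move=> jA; apply: h; rewrite mem_enum.
by rewrite mem_enum; apply: h.
Qed.

Lemma star_mono (j : 'I_n) (t s : {set 'I_n}) : t \subset s -> star j t \subset star j s.
Proof. by move=> ts; apply: imsetS. Qed.

Lemma crit_val (E : {set {set 'I_n}}) (s : {set 'I_n}) (m : 'I_n) :
  (1 < #|s|)%N -> m \in s -> (forall x, x \in s -> m <= x)%N ->
  ((critical E s)%:R : R) = (clq s \subset E)%:R *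
    (\prod_(j <- enum (Lo s)) (1 - (star j s \subset E)%:R)
     - \prod_(j <- enum (Lo s)) (1 - (star j (s :\ m) \subset E)%:R)).
Proof.
move=> hs ms mmin; rewrite !prod_ind !all_enumE.
have s0 : s != set0 by apply/set0Pn; exists m.
case C: (clq s \subset E); last first.
  by rewrite /critical /in_clique_complex clqE C andbF mul0r.
rewrite /critical /in_clique_complex clqE C s0 mu_iff // (md_iff _ _ m hs) //= mul1r.
have imp : [forall j in Lo s, ~~ (star j (s :\ m) \subset E)] ->
           [forall j in Lo s, ~~ (star j s \subset E)].
  move=> /forall_inP h; apply/forall_inP => j jL; apply: contra (h j jL).
  by apply: subset_trans; apply: star_mono; apply: subD1set.
have eA : [exists j, (j \in Lo s) && (star j s \subset E)] =
          ~~ [forall j in Lo s, ~~ (star j s \subset E)].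
  rewrite negb_forall; apply: eq_existsb => j; by rewrite negb_imply negbK.
rewrite eA negbK.
move: imp; case: [forall j in Lo s, ~~ (star j (s :\ m) \subset E)];
  case: [forall j in Lo s, ~~ (star j s \subset E)] => /=;
  move=> H; rewrite ?subrr ?subr0 //; by have := H isT.
Qed.

Lemma Ex_crit (s : {set 'I_n}) (m : 'I_n) :
  (1 < #|s|)%N -> m \in s -> (forall x, x \in s -> m <= x)%N ->
  Ex (fun E => (critical E s)%:R) =
    p ^+ 'C(#|s|, 2) * ((1 - p ^+ #|s|) ^+ #|Lo s| - (1 - p ^+ #|s :\ m|) ^+ #|Lo s|).
Proof.
move=> hs ms mmin.
rewrite (@Ex_ext _ (fun E => (clq s \subset E)%:R * \prod_(j <- enum (Lo s)) (1 - (star j s \subset E)%:R)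
     - (clq s \subset E)%:R * \prod_(j <- enum (Lo s)) (1 - (star j (s :\ m) \subset E)%:R))); last first.
  by move=> E _; rewrite (crit_val _ _ _ hs ms mmin) mulrBr.
have LL := Lo_lt _ _ ms mmin.
have Lns : forall j, j \in enum (Lo s) -> j \notin s.
  by move=> j; rewrite mem_enum inE => /bm_notin.
rewrite Ex_sub !PL ?enum_uniq ?clq_sub ?card_clq -?cardE ?mulrBr //.
all: first [ by move=> j /Lns js; apply: clq_disj => //; exact: subD1set
           | by move=> j /Lns js; apply: clq_disj
           | by apply/allP => j /Lns; apply: contra => /setD1P[]
           | by apply/allP => j /Lns ].
Qed.

End Gnp.
Arguments Lo {n}.
Arguments star {n}.
Arguments clq {n}.
Arguments Ex_crit {R n p}.
Arguments Lo_lt {n}.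
Arguments Ex_ext {R n p}.
Arguments Ex_sum {R n p}.
Lemma minex (n : nat) (s : {set 'I_n}) : s != set0 ->
  exists2 m, m \in s & forall x, x \in s -> (m <= x)%N.
Proof.
move=> /set0Pn [x xs].
case: (arg_minnP (fun y : 'I_n => nat_of_ord y) xs) => m ms mmin.
by exists m.
Qed.

Lemma Tsum (R : realFieldType) (n : nat) (E : {set {set 'I_n}}) (k1 : nat) :
  ((Tcrit E k1)%:R : R) = \sum_(s : {set 'I_n} | #|s| == k1) (critical E s)%:R.
Proof.
rewrite /Tcrit -sum1_card natr_sum big_mkcond [RHS]big_mkcond /=.
apply: eq_bigr => s _; rewrite inE.
by case: (#|s| == k1); case: (critical E s).
Qed.

Lemma EX (R : realFieldType) (n : nat) (p : R) (k : nat) : (1 <= k)%N ->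
  gnp_expect p (fun E : {set {set 'I_n}} => (Tcrit E k.+1)%:R)
  = \sum_(s : {set 'I_n} | #|s| == k.+1)
      p ^+ 'C(k.+1, 2) * ((1 - p ^+ k.+1) ^+ #|Lo s| - (1 - p ^+ k) ^+ #|Lo s|).
Proof.
move=> k1.
rewrite (@Ex_ext R n p _ (fun E => \sum_(s : {set 'I_n} | #|s| == k.+1) (critical E s)%:R));
  last by move=> E _; rewrite Tsum.
rewrite Ex_sum; apply: eq_bigr => s /eqP sk.
have s0 : s != set0 by rewrite -card_gt0 sk.
have [m ms mmin] := minex _ _ s0.
rewrite (Ex_crit s m _ ms mmin) ?sk //.
by rewrite (cardsD1 m s) ms add1n in sk; case: sk => ->.
Qed.

Definition minv (N : nat) (s : {set 'I_N.+1}) : 'I_N.+1 :=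
  odflt ord0 [pick x in s | [forall y in s, (x <= y)%N]].
Arguments minv {N}.

Lemma minvP (N : nat) (s : {set 'I_N.+1}) : s != set0 ->
  minv s \in s /\ forall y, y \in s -> (minv s <= y)%N.
Proof.
move=> s0; rewrite /minv; case: pickP => [x /andP[xs /forall_inP h]|none] //=.
have [m ms mmin] := minex _ _ s0.
by move: (none m); rewrite ms /=; move/negbT/negP; case; apply/forall_inP.
Qed.

Arguments minvP {N s}.

Lemma count_class (N : nat) (k M : nat) :
  (#|[set s : {set 'I_N.+1} | (#|s| == k.+1) && (#|Lo s| == M)]| <= 'C(N, k))%N.
Proof.
set S := [set s : {set 'I_N.+1} | _].
have inj : {in S &, injective (fun s => s :\ minv s)}.
  move=> s1 s2; rewrite !inE => /andP[/eqP c1 /eqP L1] /andP[/eqP c2 /eqP L2] e.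
  have s10 : s1 != set0 by rewrite -card_gt0 c1.
  have s20 : s2 != set0 by rewrite -card_gt0 c2.
  have [m1s m1min] := minvP s10.
  have [m2s m2min] := minvP s20.
  have key : forall (a b : {set 'I_N.+1}) ma mb, ma \in a -> (forall x, x \in a -> ma <= x)%N ->
     mb \in b -> (forall x, x \in b -> mb <= x)%N -> #|Lo a| = #|Lo b| -> (ma <= mb)%N -> ma = mb.
    move=> a b ma mb mas mamin mbs mbmin eL le.
    have sub : Lo a \subset Lo b.
      by apply/subsetP => j; rewrite (Lo_lt a ma) // (Lo_lt b mb) // => /leq_trans; apply.
    have eq : Lo a = Lo b by apply/eqP; rewrite eqEcard sub eL leqnn.
    apply: val_inj; apply/eqP; rewrite eqn_leq le /= leqNgt; apply/negP => lt.
    have : ma \in Lo b by rewrite (Lo_lt b mb).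
    by rewrite -eq (Lo_lt a ma) // ltnn.
  have mm : minv s1 = minv s2.
    case: (leqP (minv s1) (minv s2)) => h.
      by apply: (key s1 s2) => //; rewrite L1 L2.
    by apply/esym; apply: (key s2 s1) => //; [rewrite L1 L2 | exact: ltnW].
  by rewrite -(setD1K m1s) e mm setD1K.
rewrite -(card_in_imset inj).
apply: leq_trans (_ : #|[set A : {set 'I_N.+1} | A \subset [set~ ord0] & #|A| == k]| <= _)%N.
  apply: subset_leq_card; apply/subsetP => A /imsetP[s sS ->]; move: sS; rewrite /S inE => /andP[/eqP c _].
  have s0 : s != set0 by rewrite -card_gt0 c.
  have [ms mmin] := minvP s0.
  rewrite inE; apply/andP; split.
    apply/subsetP => x; rewrite !inE => /andP[xm xs]; apply: contra xm => /eqP x0.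
    by apply/eqP/val_inj; move: (mmin x xs); rewrite x0 /= leqn0 => /eqP ->.
  by move: c; rewrite (cardsD1 (minv s) s) ms add1n => -[->].
by rewrite cards_draws cardsC1 card_ord.
Qed.

Theorem lemma4p2 (R : realFieldType) (n : nat) (p : R) (k : nat) :
  (2 <= n)%N -> 0 <= p <= 1 -> (1 <= k <= n - 1)%N ->
  p ^+ ('C(k.+1, 2) + k) * ('C(n - 2, k))%:R * (1 - p)
    <= gnp_expect p (fun E : {set {set 'I_n}} => (Tcrit E k.+1)%:R)
  /\
  (0 < p ->
    gnp_expect p (fun E : {set {set 'I_n}} => (Tcrit E k.+1)%:R)
      <= p ^ (('C(k.+1, 2))%:Z - k%:Z - 1) * ('C(n - 1, k))%:R * (1 - p)).
Proof.
case: n => [|[|N]] //= _ /andP[p0 p1] /andP[k1 kn].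
rewrite (EX _ _ _ _ k1).
set c := 'C(k.+1, 2).
set g := fun M : nat => (1 - p ^+ k.+1) ^+ M - (1 - p ^+ k) ^+ M.
have ab : p ^+ k.+1 <= p ^+ k by rewrite exprS ler_piMl // exprn_ge0.
have b1 : p ^+ k <= 1 by rewrite exprn_ile1.
have a0 : 0 <= p ^+ k.+1 by rewrite exprn_ge0.
have gge0 : forall M, 0 <= g M.
  by move=> M; rewrite /g subr_ge0; apply: powle; lra.
have Fge0 : forall s : {set 'I_N.+2}, 0 <= p ^+ c * g #|Lo s|.
  by move=> s; rewrite mulr_ge0 ?exprn_ge0.
split.
  pose one : 'I_N.+2 := @Ordinal N.+2 1 isT.
  have o01 : (ord0 : 'I_N.+2) != one by [].
  pose T := [set t : {set 'I_N.+2} | t \subset ~: [set ord0; one] & #|t| == k].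
  pose h := fun t : {set 'I_N.+2} => one |: t.
  have oT : forall t, t \in T -> one \notin t.
    move=> t; rewrite inE => /andP[/subsetP tC _]; apply/negP => /tC.
    by rewrite !inE eqxx orbT.
  have hinj : {in T &, injective h}.
    by move=> t1 t2 /oT o1 /oT o2 e; rewrite -(setU1K o1) -(setU1K o2); congr (_ :\ _).
  have step1 : \sum_(s in h @: T) p ^+ c * g #|Lo s| <= \sum_(s : {set 'I_N.+2} | #|s| == k.+1) p ^+ c * g #|Lo s|.
    rewrite [X in _ <= X](bigID (fun s => s \in h @: T)) /=.
    rewrite [X in _ <= X + _](eq_bigl (fun s => s \in h @: T)); last first.
      move=> s; apply: andb_idl => /imsetP[t tT ->].
      by rewrite cardsU1 (oT _ tT) add1n; move: tT; rewrite inE => /andP[_ /eqP ->].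
    by rewrite lerDl sumr_ge0.
  apply: le_trans step1; rewrite big_imset //.
  rewrite (eq_bigr (fun _ => p ^+ c * (p ^+ k * (1 - p)))); last first.
    move=> t tT.
    have Lh : Lo (h t) = [set ord0].
      apply/setP => j; rewrite (Lo_lt (h t) one) ?inE ?eqxx //; last first.
        move=> x; rewrite !inE => /orP[/eqP -> //|xt].
        move: tT; rewrite inE => /andP[/subsetP /(_ x xt) + _].
        by rewrite !inE negb_or; case: x {xt} => [[|[|x]] ?].
      by case: j => [[|j] ?].
    by rewrite Lh cards1 /g !expr1 exprS; congr (_ * _); ring.
  rewrite sumr_const cards_draws.
  have -> : #|~: [set (ord0 : 'I_N.+2); one]| = N.
    by have := cardsC [set (ord0 : 'I_N.+2); one]; rewrite cards2 o01 card_ord; lia.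
  rewrite !subSS subn0 -mulr_natr exprD le_eqVlt; apply/orP; left; apply/eqP; ring.
move=> pp.
have pn0 : p != 0 by rewrite lt0r_neq0.
have a0' : 0 < p ^+ k.+1 by rewrite exprn_gt0.
rewrite (partition_big (fun s : {set 'I_N.+2} => (inord #|Lo s| : 'I_N.+3)) xpredT) //=.
have cardL : forall s : {set 'I_N.+2}, (#|Lo s| < N.+3)%N.
  by move=> s; rewrite ltnS (leq_trans (max_card _)) ?card_ord.
apply: le_trans (_ : \sum_(M : 'I_N.+3) (p ^+ c * g M) *+ 'C(N.+1, k) <= _).
  apply: ler_sum => M _.
  rewrite (eq_bigr (fun _ => p ^+ c * g M)); last first.
    by move=> s /andP[_ /eqP <-]; rewrite inordK.
  rewrite sumr_const; apply: ler_wpMn2l; first by rewrite mulr_ge0 ?exprn_ge0.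
  apply: leq_trans (count_class N.+1 k M); apply: subset_leq_card.
  apply/subsetP => s; rewrite !inE => /andP[-> /eqP <-] /=.
  by rewrite inordK.
rewrite sumrMnl -mulr_sumr.
have gs : \sum_(i < N.+3) g i <= (p ^+ k.+1)^-1 - (p ^+ k)^-1.
  by rewrite /g; apply: gsum_bound.
have ez : p ^ (c%:Z - k%:Z - 1) = p ^+ c / p ^+ k.+1.
  apply: (mulIf (expf_neq0 k.+1 pn0)); rewrite divfK ?expf_neq0 //.
  rewrite !exprnP -expfzDr //; congr (p ^ _).
  lia.
apply: le_trans (_ : p ^+ c * ((p ^+ k.+1)^-1 - (p ^+ k)^-1) *+ 'C(N.+1, k) <= _).
  by apply: ler_wMn2r; apply: ler_wpM2l; rewrite ?exprn_ge0.
rewrite ez subSS subn0 -mulr_natr le_eqVlt; apply/orP; left; apply/eqP.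
rewrite exprS; field; by rewrite expf_neq0.
Qed.
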